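(* Assume Condition (T) (see context) and let $(\mathbf W_t)_{t\in\mathbb Z}$, $\mathbf W_t=(W_{1,t},\dots,W_{d,t})$, be the stationary solution of $\mathbf W_t=\mathbf A_t\mathbf W_{t-1}+\mathbf B_t$. Then for every $t\in\mathbb Z$ and $i=1,\dots,d$, $$W_{i,t}=\sum_{n=0}^\infty \Pi^{(i)}_{t,t-n+1}D_{i,t-n}\quad\text{a.s.},$$ where $D_{i,t}=\sum_{j:\,i\prec j}A_{ij,t}W_{j,t-1}+B_{i,t}$ and $\Pi^{(i)}_{t,s}=A_{ii,t}A_{ii,t-1}\cdots A_{ii,s}$ for $t\ge s$, $\Pi^{(i)}_{t,s}=1$ for $t<s$.
   Context: $(\mathbf A_t,\mathbf B_t)_{t\in\mathbb Z}$ is an i.i.d. sequence of copies of $(\mathbf A,\mathbf B)$, a random $d\times d$ matrix and random vector in $\mathbb R^d$, with entries $A_{ij,t}$, $B_{i,t}$. Condition (T): (T-1) $\mathbf A\ge 0$, $\mathbf B\ge 0$ entrywise a.s.; (T-2) $\mathbb P(B_i=0)<1$ for all $i$; (T-3) $\mathbb P(A_{ij}=0)=1$ whenever $i>j$; (T-4) there exist $\alpha_1,\dots,\alpha_d>0$, pairwise distinct, with $\mathbb E A_{ii}^{\alpha_i}=1$; (T-5) $\mathbb E A_{ij}^{\alpha_i}<\infty$; (T-6) $\mathbb E B_i^{\alpha_i}<\infty$; (T-7) $\mathbb E[A_{ii}^{\alpha_i}\log^+A_{ii}]<\infty$; (T-8) the law of $\log A_{ii}$ given $\{A_{ii}>0\}$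 is non-arithmetic. Under (T) the stationary solution exists, is unique, and is given by $\mathbf W_t=\sum_{n\ge0}\mathbf A_t\cdots\mathbf A_{t-n+1}\mathbf B_{t-n}$ (empty product = identity). Write $i\prec j$ if $i\neq j$ and $\mathbb P(A_{ij}>0)>0$. *)

(* Defs.v *)
From HB Require Import structures.
From mathcomp Require Import all_boot all_order all_algebra.
From mathcomp Require Import all_classical all_reals all_analysis.
Set Implicit Arguments. Unset Strict Implicit. Unset Printing Implicit Defensive.
Import Order.TTheory GRing.Theory Num.Theory.
Import numFieldNormedType.Exports.
Local Open Scope classical_set_scope.
Local Open Scope ring_scope.

Section Defs.
Context {R : realType} {dT : measure_display} {T : measurableType dT}
  (P : probability T R) (d : nat).

Definition coordAB (A : int -> T -> 'M[R]_d) (B : int -> T -> 'cV[R]_d)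
  (t : int) (x : T) (k : ('I_d * 'I_d) + 'I_d) : R :=
  match k with inl (i, j) => A t x i j | inr i => B t x i ord0 end.

Definition sigmaAB (A : int -> T -> 'M[R]_d) (B : int -> T -> 'cV[R]_d) (t : int) : set (set T) :=
  <<s [set E | exists k U, measurable (U : set R) /\
                           E = (fun x => coordAB A B t x k) @^-1` U] >>.

Definition indep_AB (A : int -> T -> 'M[R]_d) (B : int -> T -> 'cV[R]_d) : Prop :=
  forall (s : seq int) (E : int -> set T), uniq s ->
    (forall t, t \in s -> sigmaAB A B t (E t)) ->
    P (\big[setI/setT]_(t <- s) E t) = (\prod_(t <- s) P (E t))%E.

(* (A_t,B_t) has the same joint law as (A_0,B_0), for every t
   (equality of the laws on measurable rectangles of R^(d*d+d)). *)
Definition identdist_AB (A : int -> T -> 'M[R]_d) (B : int -> T -> 'cV[R]_d) : Prop :=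
  forall (t : int) (U : ('I_d * 'I_d) + 'I_d -> set R),
    (forall k, measurable (U k)) ->
    P (\big[setI/setT]_k ((fun x => coordAB A B t x k) @^-1` U k)) =
    P (\big[setI/setT]_k ((fun x => coordAB A B 0%R x k) @^-1` U k)).

Fixpoint prodA (A : int -> T -> 'M[R]_d) (t : int) (n : nat) (x : T) : 'M[R]_d :=
  match n with
  | 0 => 1%:M
  | n'.+1 => prodA A t n' x *m A (t - n'%:Z) x
  end.

(* The stationary solution W_t = sum_{n>=0} A_t...A_{t-n+1} B_{t-n}, coordinatewise;
   all terms are nonnegative, so the series is taken in the extended reals. *)
Definition Wsol (A : int -> T -> 'M[R]_d) (B : int -> T -> 'cV[R]_d) (t : int) (i : 'I_d) (x : T) : \bar R :=
  (\sum_(0 <= n <oo) ((prodA A t n x *m B (t - n%:Z) x) i ord0)%:E)%E.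

(* i ≺ j : i != j and P(A_ij > 0) > 0, with A a generic copy (here A_0). *)
Definition prec (A : int -> T -> 'M[R]_d) (i j : 'I_d) : Prop :=
  i != j /\ (0 < P [set x | (0 < A 0%R x i j)%R])%E.

(* Pi^(i)_{t,t-n+1} = A_ii,t ... A_ii,t-n+1 (= 1 when n = 0) *)
Definition PiA (A : int -> T -> 'M[R]_d) (i : 'I_d) (t : int) (n : nat) (x : T) : R :=
  \prod_(k < n) A (t - k%:Z) x i i.

Definition Dterm (A : int -> T -> 'M[R]_d) (B : int -> T -> 'cV[R]_d) (i : 'I_d) (t : int) (x : T) : \bar R :=
  (\sum_(j < d | `[< prec A i j >]) ((A t x i j)%:E * Wsol A B (t - 1) j x)
     + (B t x i ord0)%:E)%E.

Definition nonarithmetic_log (Y : T -> R) : Prop :=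
  forall h : R, 0 < h ->
    (0 < P [set x | ((0 < Y x) /\ ~ (exists k : int, ln (Y x) = k%:~R * h))%R])%E.

Definition logp (x : R) : R := Num.max (ln x) 0.

Definition condT (A : int -> T -> 'M[R]_d) (B : int -> T -> 'cV[R]_d)
  (alpha : 'I_d -> R) : Prop :=
  (forall i j, P [set x | 0 <= A 0%R x i j] = 1%E) /\
  (forall i, P [set x | 0 <= B 0%R x i ord0] = 1%E) /\
  (forall i, (P [set x | (B 0%R x i ord0 = 0)%R] < 1)%E) /\
  (forall i j : 'I_d, (j < i)%N -> P [set x | A 0%R x i j = 0] = 1%E) /\
  (forall i, 0 < alpha i) /\ injective alpha /\
  (forall i, (\int[P]_x ((A 0%R x i i) `^ (alpha i))%:E)%E = 1%E) /\
  (forall i j, (\int[P]_x ((A 0%R x i j) `^ (alpha i))%:E < +oo)%E) /\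
  (forall i, (\int[P]_x ((B 0%R x i ord0) `^ (alpha i))%:E < +oo)%E) /\
  (forall i, (\int[P]_x ((A 0%R x i i) `^ (alpha i) * logp (A 0%R x i i))%:E < +oo)%E) /\
  (forall i, nonarithmetic_log (fun x => A 0%R x i i)).

End Defs.

(* Main.v *)
Require Import Defs.
From HB Require Import structures.
From mathcomp Require Import all_boot all_order all_algebra.
From mathcomp Require Import all_classical all_reals all_analysis.
Import Order.TTheory GRing.Theory Num.Theory.
Local Open Scope classical_set_scope.
Local Open Scope ring_scope.

Section Alg.
Context {R : realType} {dT : measure_display} {T : measurableType dT}
  (P : probability T R) (d : nat)
  (A : int -> T -> 'M[R]_d) (B : int -> T -> 'cV[R]_d) (x : T).
Hypothesis hA : forall s i j, 0 <= A s x i j.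
Hypothesis hB : forall s i, 0 <= B s x i ord0.

Lemma intSB (s : int) (n : nat) : s - (n.+1)%:Z = s - 1 - n%:Z.
Proof. by rewrite intS opprD addrA. Qed.

Lemma prodAS s n : prodA A s n.+1 x = A s x *m prodA A (s - 1) n x.
Proof.
elim: n s => [|n IH] s.
  by rewrite /= mul1mx mulmx1 subr0.
have -> : prodA A s n.+2 x = prodA A s n.+1 x *m A (s - n.+1%:Z) x by [].
by rewrite IH -mulmxA intSB.
Qed.

Lemma prodA_ge0 s n i j : 0 <= prodA A s n x i j.
Proof.
elim: n s i j => [|n IH] s i j /=.
  by rewrite mxE; case: (i == j).
rewrite mxE; apply: sumr_ge0 => k _; exact: mulr_ge0.
Qed.

Lemma term_ge0 s n i : 0 <= (prodA A s n x *m B (s - n%:Z) x) i ord0.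
Proof. rewrite mxE; apply: sumr_ge0 => k _; exact: mulr_ge0 (prodA_ge0 _ _ _ _) (hB _ _). Qed.

Definition wK (K : nat) (s : int) (j : 'I_d) : R :=
  \sum_(n < K) (prodA A s n x *m B (s - n%:Z) x) j ord0.

Lemma wK_ge0 K s j : 0 <= wK K s j.
Proof. by apply: sumr_ge0 => n _; exact: term_ge0. Qed.

Lemma termS s n i : (prodA A s n.+1 x *m B (s - n.+1%:Z) x) i ord0 =
  \sum_j A s x i j * (prodA A (s - 1) n x *m B (s - 1 - n%:Z) x) j ord0.
Proof. by rewrite prodAS intSB -mulmxA mxE. Qed.

Lemma wK_step K s i :
  wK K.+1 s i = B s x i ord0 + \sum_j A s x i j * wK K (s - 1) j.
Proof.
rewrite /wK big_ord_recl /= mul1mx subr0; congr (_ + _).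
under eq_bigr => n _ do rewrite /bump /= add1n termS.
rewrite exchange_big /=; apply: eq_bigr => j _; rewrite mulr_sumr //.
Qed.

Lemma Wsol_ge0 s j : (0 <= Wsol A B s j x)%E.
Proof. by apply: nneseries_ge0 => n _ _; rewrite lee_fin term_ge0. Qed.

Lemma W_step s i :
  Wsol A B s i x = ((B s x i ord0)%:E + \sum_j ((A s x i j)%:E * Wsol A B (s - 1) j x))%E.
Proof.
rewrite /Wsol nneseries_recl; last first.
  by []. by move=> n _; rewrite lee_fin term_ge0.
rewrite /= mul1mx subr0; congr (_ + _)%E.
rewrite -nneseries_addn; last by move=> n; rewrite lee_fin term_ge0.
under eq_eseriesr => n _ do rewrite addn1 termS -sumEFin.
rewrite nneseries_sum; last by move=> j n _; rewrite lee_fin mulr_ge0 // term_ge0.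
apply: eq_bigr => j _.
under eq_eseriesr => n _ do rewrite EFinM.
by rewrite nneseriesZl // => n _; rewrite lee_fin term_ge0.
Qed.

Hypothesis hZ : forall s i j, i != j -> ~ prec P A i j -> A s x i j = 0.
Local Open Scope ereal_scope.

Lemma sum_split (F : 'I_d -> \bar R) s i :
  \sum_j ((A s x i j)%:E * F j) =
  (A s x i i)%:E * F i + \sum_(j | `[< prec P A i j >]) ((A s x i j)%:E * F j).
Proof.
rewrite (bigD1 i) //=; congr (_ + _).
rewrite (bigID (fun j => `[< prec P A i j >])) /=.
rewrite [X in _ + X]big1 ?adde0; last first.
  move=> j /andP[ji /asboolPn np]; rewrite hZ ?mul0e // eq_sym //.
apply: eq_bigl => j; case: asboolP; rewrite ?andbF // => -[ij _].
by rewrite eq_sym ij.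
Qed.

Lemma D_ge0 s i : 0 <= Dterm P A B i s x.
Proof.
apply: adde_ge0; last by rewrite lee_fin.
apply: sume_ge0 => j _; apply: mule_ge0; first by rewrite lee_fin.
exact: Wsol_ge0.
Qed.

Lemma W_rec s i : Wsol A B s i x = (A s x i i)%:E * Wsol A B (s - 1) i x + Dterm P A B i s x.
Proof.
rewrite W_step // sum_split /Dterm.
by rewrite addeC -addeA [X in _ + X]addeC.
Qed.

Lemma PiA_S i t n : PiA A i t n.+1 x = (A t x i i * PiA A i (t - 1) n x)%R.
Proof.
rewrite /PiA big_ord_recl /= subr0; congr (_ * _)%R.
by apply: eq_bigr => k _; rewrite /bump /= add1n intSB.
Qed.

Lemma PiA_ge0 i t n : (0 <= PiA A i t n x)%R.
Proof. by apply: prodr_ge0. Qed.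

Definition S i N t := \sum_(0 <= n < N) ((PiA A i t n x)%:E * Dterm P A B i (t - n%:Z) x).

Lemma S_rec i N t : S i N.+1 t = Dterm P A B i t x + (A t x i i)%:E * S i N (t - 1).
Proof.
rewrite /S big_nat_recl // /PiA big_ord0 mul1e subr0; congr (_ + _).
rewrite ge0_sume_distrr; last first.
  by move=> n _; apply: mule_ge0; [rewrite lee_fin PiA_ge0|exact: D_ge0].
apply: eq_bigr => n _; rewrite -/(PiA A i t n.+1 x) PiA_S EFinM -muleA intSB //.
Qed.

Lemma S_le i N t : S i N t <= Wsol A B t i x.
Proof.
elim: N t => [|N IH] t.
  by rewrite /S big_geq // Wsol_ge0.
rewrite S_rec W_rec [X in _ <= X]addeC; apply: leeD2l; apply: lee_wpmul2l; first by rewrite lee_fin.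
exact: IH.
Qed.

Lemma wK_le i K t : (wK K t i)%:E <= S i K t.
Proof.
elim: K t i => [|K IH] t i.
  by rewrite /wK /S big_ord0 big_geq.
rewrite wK_step EFinD -sumEFin.
under eq_bigr => j _ do rewrite EFinM.
rewrite sum_split S_rec /Dterm [X in _ <= X]addeC [X in _ <= X]addeA [X in X <= _]addeC.
apply: leeD; last done.
  apply: leeD; first by apply: lee_wpmul2l; [rewrite lee_fin|exact: IH].
  apply: lee_sum => j _; apply: lee_wpmul2l; first by rewrite lee_fin.
  rewrite /Wsol; apply: le_trans (nneseries_lim_ge K _); last by move=> n _ _; rewrite lee_fin term_ge0.
  by rewrite /wK sumEFin big_mkord.
Qed.

Lemma W_eq t i : Wsol A B t i x =
  \sum_(0 <= n <oo) ((PiA A i t n x)%:E * Dterm P A B i (t - n%:Z) x).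
Proof.
apply/le_anti/andP; split.
  apply: lime_le.
    by apply: is_cvg_nneseries => n _ _; rewrite lee_fin term_ge0.
  near=> K; rewrite sumEFin big_mkord.
  apply: le_trans (wK_le i K t) _.
  apply: nneseries_lim_ge => n _ _; apply: mule_ge0; [by rewrite lee_fin PiA_ge0|exact: D_ge0].
apply: lime_le.
  by apply: is_cvg_nneseries => n _ _; apply: mule_ge0; [by rewrite lee_fin PiA_ge0|exact: D_ge0].
by near=> N; exact: S_le.
Unshelve. all: by end_near.
Qed.

End Alg.
Section Prob.
Context {R : realType} {dT : measure_display} {T : measurableType dT}
  (P : probability T R).

Lemma ae_negl (Q : T -> Prop) : P.-negligible (~` [set x | Q x]) -> {ae P, forall x, Q x}.
Proof. by []. Qed.

Lemma ae_neglE (Q : T -> Prop) : {ae P, forall x, Q x} -> P.-negligible (~` [set x | Q x]).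
Proof. by []. Qed.

Lemma ae_count (I : countType) (Q : I -> T -> Prop) :
  (forall i, {ae P, forall x, Q i x}) -> {ae P, forall x, forall i, Q i x}.
Proof.
move=> H; apply: ae_negl.
pose F k := match (unpickle k : option I) with Some i => ~` [set x | Q i x] | None => set0 end.
apply: (@negligibleS _ _ _ _ (\bigcup_k F k)); last first.
  apply: negligible_bigcup => k; rewrite /F; case: unpickle => [i|].
    exact: ae_neglE.
  exact: negligible_set0.
move=> x /= /existsNP [i Hi]; exists (pickle i) => //; rewrite /F pickleK //.
Qed.

Lemma ae_of_prob1 (E : set T) : measurable E -> P E = 1%E -> {ae P, forall x, E x}.
Proof.
move=> mE PE; apply: ae_negl; apply/negligibleP; first exact: measurableC.
by change (P (~` E) = 0%E); rewrite probability_setC // PE subee.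
Qed.

Lemma ae_of_prob0 (E : set T) : measurable E -> P E = 0%E -> {ae P, forall x, ~ E x}.
Proof.
move=> mE PE; apply: ae_negl; exists E; split => // x /=; exact: contrapT.
Qed.

End Prob.

Section Main.
Context {R : realType} {dT : measure_display} {T : measurableType dT}
  (P : probability T R) (d : nat)
  (A : int -> T -> 'M[R]_d) (B : int -> T -> 'cV[R]_d).

Lemma transfer s k0 (U : set R) : identdist_AB P A B -> measurable U ->
  P ((fun x => coordAB A B s x k0) @^-1` U) = P ((fun x => coordAB A B 0 x k0) @^-1` U).
Proof.
move=> hid mU.
have H := hid s (fun k => if k == k0 then U else setT).
have E r : \big[setI/setT]_k ((fun x => coordAB A B r x k) @^-1` (if k == k0 then U else setT))
   = (fun x => coordAB A B r x k0) @^-1` U.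
  rewrite (bigD1 k0) //= eqxx big1 ?setIT // => k /negbTE ->; exact: preimage_setT.
rewrite -!E; apply: H => k; case: ifP => // _; exact: measurableT.
Qed.

End Main.

Theorem lemma5p1 (R : realType) (dT : measure_display) (T : measurableType dT)
  (P : probability T R) (d : nat)
  (A : int -> T -> 'M[R]_d) (B : int -> T -> 'cV[R]_d) (alpha : 'I_d -> R) :
  (forall t i j, measurable_fun setT (fun x => A t x i j)) ->
  (forall t i, measurable_fun setT (fun x => B t x i ord0)) ->
  indep_AB P A B ->
  identdist_AB P A B ->
  condT P A B alpha ->
  forall (t : int) (i : 'I_d),
    {ae P, forall x,
      Wsol A B t i x =
      (\sum_(0 <= n <oo) ((PiA A i t n x)%:E * Dterm P A B i (t - n%:Z) x))%E}.
Proof.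
move=> mA mB _ hid [hA0 [hB0 _]] t i.
have mpre (f : T -> R) (U : set R) : measurable_fun setT f -> measurable U -> measurable (f @^-1` U).
  by move=> mf mU; rewrite -[f @^-1` U]setTI; exact: mf.
have gA s a b : {ae P, forall x, 0 <= A s x a b}.
  have E r : [set x | 0 <= A r x a b] = (fun x => coordAB A B r x (inl (a, b))) @^-1` `[0, +oo[%classic.
    by apply/seteqP; split => y /=; rewrite in_itv /= andbT.
  apply: (@ae_of_prob1 _ _ _ P [set x | 0 <= A s x a b]); first by rewrite E; exact: (mpre _ _ (mA s a b) (measurable_itv _)).
  by rewrite E transfer // ?(measurable_itv) -E hA0.
have gB s a : {ae P, forall x, 0 <= B s x a ord0}.
  have E r : [set x | 0 <= B r x a ord0] = (fun x => coordAB A B r x (inr a)) @^-1` `[0, +oo[%classic.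
    by apply/seteqP; split => y /=; rewrite in_itv /= andbT.
  apply: (@ae_of_prob1 _ _ _ P [set x | 0 <= B s x a ord0]); first by rewrite E; exact: (mpre _ _ (mB s a) (measurable_itv _)).
  by rewrite E transfer // ?(measurable_itv) -E hB0.
have gZ s a b : {ae P, forall x, a != b -> ~ prec P A a b -> ~ (0 < A s x a b)}.
  have [pr|npr] := pselect (prec P A a b).
    by apply: aeW => x _ [].
  have [ab|nab] := eqVneq a b.
    by apply: aeW => x; rewrite ?ab ?eqxx.
  have E r : [set x | 0 < A r x a b] = (fun x => coordAB A B r x (inl (a, b))) @^-1` `]0, +oo[%classic.
    by apply/seteqP; split => y /=; rewrite in_itv /= andbT.
  have P0 : P [set x | 0 < A 0 x a b] = 0%E.
    apply/le_anti/andP; split; last exact: measure_ge0.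
    by rewrite leNgt; apply/negP => h; apply: npr; split.
  have := @ae_of_prob0 _ _ _ P [set x | 0 < A s x a b].
  move=> /(_ _ _) H; apply: filterS (H _ _) => //.
    by rewrite E; exact: (mpre _ _ (mA s a b) (measurable_itv _)).
  by rewrite E transfer // ?(measurable_itv) -E.
have good : {ae P, forall x, forall p : int * 'I_d * 'I_d,
   [/\ 0 <= A p.1.1 x p.1.2 p.2, 0 <= B p.1.1 x p.1.2 ord0 &
     (p.1.2 != p.2 -> ~ prec P A p.1.2 p.2 -> ~ (0 < A p.1.1 x p.1.2 p.2))]}.
  apply: ae_count => -[[s a] b] /=.
  have h1 := gA s a b; have h2 := gB s a; have h3 := gZ s a b.
  near=> x; split; [exact: (near h1 x)|exact: (near h2 x)|exact: (near h3 x)].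
apply: filterS good => x H.
apply: W_eq.
- by move=> s a b; have [] := H (s, a, b).
- by move=> s a; have [] := H (s, a, a).
- move=> s a b ab np; have [h1 _ h3] := H (s, a, b).
  apply/eqP; rewrite eq_le h1 andbT leNgt; apply/negP => h; exact: (h3 ab np h).
Unshelve. all: by end_near.
Qed.
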